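(* Let $(\mathbb{X},\oplus,\otimes,\mathbb{0},\mathbb{1})$ be a linearly ordered, algebraically complete idempotent semifield, let $\bm{A}_1,\ldots,\bm{A}_m\in\mathbb{X}^{n\times n}$ be matrices and $w_1,\ldots,w_m\in\mathbb{X}$ scalars such that $\bm{B}=w_{1}(\bm{A}_{1}\oplus\bm{A}_{1}^{-})\oplus\cdots\oplus w_{m}(\bm{A}_{m}\oplus\bm{A}_{m}^{-})$ has no zero entries. Let $\mu$ be the spectral radius of $\bm{B}$ and $\bm{B}_{\mu}=\mu^{-1}\bm{B}$. Consider the problem of minimizing $\max_{1\le i\le m} w_i\, d(\bm{A}_i,\bm{x}\bm{x}^{-})$ (i.e. $\bigoplus_{i=1}^m w_i d(\bm{A}_i,\bm{x}\bm{x}^{-})$) over all regular vectors $\bm{x}\in\mathbb{X}^n$. Then the minimum value equals $\mu$, and the set of all solutions is $\{\bm{x}=\bm{B}_{\mu}^{\ast}\bm{u}:\bm{u}\in\mathbb{X}^n,\ \bm{u}\ne\bm{0}\}$.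
   Context: An idempotent semifield is a set $\mathbb{X}$ with associative, commutative operations $\oplus$ (addition) and $\otimes$ (multiplication, usually omitted in writing) with neutral elements $\mathbb{0}$ and $\mathbb{1}$, multiplication distributing over addition, idempotent addition ($x\oplus x=x$), and every nonzero $x$ having an inverse $x^{-1}$ with $xx^{-1}=\mathbb{1}$. It is assumed linearly ordered by the order $x\le y \iff x\oplus y=y$, and algebraically complete: $x^p=a$ is solvable for every $a$ and integer $p>0$, so rational powers are defined. Matrix and vector operations (including scalar multiplication) use the usual formulas with $\oplus,\otimes$ in place of $+,\times$; $\bm{0}$ is the zero vector; a vector is regular if it has no zero entries. For a nonzero column vector $\bm{x}=(x_i)$, $\bm{x}^{-}$ is the row vector with entries $x_i^{-1}$ if $x_i\ne\mathbb{0}$ and $\mathbb{0}$ otherwise. For a nonzero matrix $\bm{A}=(a_{ij})$, $\bm{A}^{-}=(a^{-}_{ij})$ with $a^{-}_{ij}=a_{ji}^{-1}$ if $a_{ji}\neq\mathbb{0}$ and $\mathbb{0}$ otherwise. The trace is $\mathrm{tr}\,\bm{A}=a_{11}\oplus\cdots\oplus a_{nn}$. The distance between square matrices is $d(\bm{A},\bm{B})=\mathrm{tr}(\bm{B}^{-}\bm{A})\oplus\mathrm{tr}(\bm{A}^{-}\bm{B})$. $\bm{I}$ is the identity matrix, $\bm{A}^0=\bm{I}$, $\bm{A}^p=\bm{A}^{p-1}\bm{A}$. The spectral radius of $\bm{A}$ of order $n$ is $\lambda=\bigoplus_{k=1}^{n}\bigoplus_{1\le i_1,\ldots,i_k\le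 n}(a_{i_1i_2}a_{i_2i_3}\cdots a_{i_ki_1})^{1/k}$. For a square matrix $\bm{M}$ of order $n$, $\bm{M}^{\ast}=\bm{I}\oplus\bm{M}\oplus\cdots\oplus\bm{M}^{n-1}$. *)

(* Defs.v *)
(* An idempotent semifield is modelled as a commutative
   nontrivial semiring X (comNzSemiRingType: provides 0, 1, +, *, with
   associativity, commutativity, distributivity, 0 absorbing, 0 <> 1) together
   with hypotheses (stated in the theorem) of idempotency, inverses,
   linear order and algebraic completeness.  Here + is the paper's (+)
   (oplus) and * its (x) (otimes). *)
From HB Require Import structures.
From mathcomp Require Import all_boot all_order all_algebra.
From Stdlib Require Import ClassicalEpsilon.
Set Implicit Arguments. Unset Strict Implicit. Unset Printing Implicit Defensive.
Import GRing.Theory.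
Local Open Scope ring_scope.

Section IdemSemifield.
Variable X : comNzSemiRingType.

Definition sle (x y : X) : Prop := x + y = y.

Definition sinv (x : X) : X := epsilon (inhabits 0) (fun y => x * y = 1).

(* k-th root (k > 0): some y with y^k = a (exists by algebraic completeness;
   it is unique in a linearly ordered idempotent semifield) *)
Definition sroot (k : nat) (a : X) : X := epsilon (inhabits 0) (fun y => y ^+ k = a).

Definition sinvz (x : X) : X := if x == 0 then 0 else sinv x.

Definition regular n (x : 'cV[X]_n) : Prop := forall i, x i 0 <> 0.

Definition vconj n (x : 'cV[X]_n) : 'rV[X]_n := \row_i sinvz (x i 0).

Definition mconj n (A : 'M[X]_n) : 'M[X]_n := \matrix_(i, j) sinvz (A j i).

Definition mdist n (A B : 'M[X]_n) : X :=
  \tr (mconj B *m A) + \tr (mconj A *m B).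

Definition mxpow n (A : 'M[X]_n) (p : nat) : 'M[X]_n :=
  iter p (fun M => M *m A) 1%:M.

Definition mxstar n (M : 'M[X]_n) : 'M[X]_n := \sum_(k < n) mxpow M k.

(* spectral radius:
   (+)_{k=1}^n (+)_{i_1..i_k} (a_{i1 i2} ... a_{ik i1})^{1/k};
   a cycle of length k = j.+1 is a function s : 'I_k -> 'I_n, and the
   successor of position t is ordS t (cyclically). *)
Definition specrad n (A : 'M[X]_n) : X :=
  \sum_(j < n) \sum_(s : {ffun 'I_j.+1 -> 'I_n})
     sroot j.+1 (\prod_(t < j.+1) A (s t) (s (ordS t))).

End IdemSemifield.

(* Main.v *)
Require Import Defs.
From HB Require Import structures.
From mathcomp Require Import all_boot all_order all_algebra.
From Stdlib Require Import ClassicalEpsilon.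
From mathcomp Require Import ring.
Import GRing.Theory.
Local Open Scope ring_scope.
Set Implicit Arguments. Unset Strict Implicit.

Section Basic.
Variable X : comNzSemiRingType.
Hypothesis add_idem : forall x : X, x + x = x.
Hypothesis mul_inv : forall x : X, x != 0 -> exists y : X, x * y = 1.
Hypothesis lin_order : forall x y : X, x + y = x \/ x + y = y.
Hypothesis alg_complete : forall (a : X) (p : nat), (0 < p)%N -> exists x : X, x ^+ p = a.

Local Notation "x <=s y" := (@sle X x y) (at level 70).
Implicit Types x y z : X.

Lemma sle_refl x : x <=s x. Proof. exact: add_idem. Qed.
Lemma sle_trans x y z : x <=s y -> y <=s z -> x <=s z.
Proof. by rewrite /sle => Hxy Hyz; rewrite -Hyz addrA Hxy. Qed.
Lemma sle_anti x y : x <=s y -> y <=s x -> x = y.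
Proof. by rewrite /sle => H1 H2; rewrite -H1 addrC H2. Qed.
Lemma sle_total x y : x <=s y \/ y <=s x.
Proof. by case: (lin_order x y) => H; [right; rewrite /sle addrC|left]. Qed.
Lemma sle0 x : 0 <=s x. Proof. by rewrite /sle add0r. Qed.
Lemma sle_addl x y : x <=s x + y. Proof. by rewrite /sle addrA add_idem. Qed.
Lemma sle_addr x y : y <=s x + y. Proof. by rewrite addrC; apply: sle_addl. Qed.
Lemma sle_add x y z : x <=s z -> y <=s z -> x + y <=s z.
Proof. by rewrite /sle => H1 H2; rewrite -addrA H2 H1. Qed.
Lemma sle_add2 x y x' y' : x <=s x' -> y <=s y' -> x + y <=s x' + y'.
Proof.
move=> H1 H2; apply: sle_add.
  exact: sle_trans H1 (sle_addl _ _).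
exact: sle_trans H2 (sle_addr _ _).
Qed.
Lemma sle_mulr x y z : x <=s y -> x * z <=s y * z.
Proof. by rewrite /sle => H; rewrite -mulrDl H. Qed.
Lemma sle_mull x y z : x <=s y -> z * x <=s z * y.
Proof. by rewrite ![z * _]mulrC; apply: sle_mulr. Qed.
Lemma sle_mul2 x y x' y' : x <=s x' -> y <=s y' -> x * y <=s x' * y'.
Proof. move=> H1 H2; apply: sle_trans (sle_mulr y H1) (sle_mull x' H2). Qed.

Lemma sle_sum (I : Type) (r : seq I) (P : pred I) (F G : I -> X) :
  (forall i, P i -> F i <=s G i) ->
  \sum_(i <- r | P i) F i <=s \sum_(i <- r | P i) G i.
Proof.
move=> H; apply: (big_ind2 (fun a b => a <=s b)); last exact: H.
  exact: sle_refl.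
by move=> ? ? ? ?; apply: sle_add2.
Qed.

Lemma sle_sumb (I : Type) (r : seq I) (P : pred I) (F : I -> X) (c : X) :
  (forall i, P i -> F i <=s c) -> \sum_(i <- r | P i) F i <=s c.
Proof.
move=> H; apply: (big_ind (fun a => a <=s c)); last exact: H.
  exact: sle0.
by move=> ? ?; apply: sle_add.
Qed.

Lemma sle_term (I : finType) (F : I -> X) i : F i <=s \sum_j F j.
Proof. by rewrite (bigD1 i) //=; apply: sle_addl. Qed.

Lemma sle_prod (I : Type) (r : seq I) (P : pred I) (F G : I -> X) :
  (forall i, P i -> F i <=s G i) ->
  \prod_(i <- r | P i) F i <=s \prod_(i <- r | P i) G i.
Proof.
move=> H; apply: (big_ind2 (fun a b => a <=s b)); last exact: H.
  exact: sle_refl.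
by move=> ? ? ? ?; apply: sle_mul2.
Qed.

Lemma sum_max (I : eqType) (s : seq I) (F : I -> X) :
  s != [::] -> exists2 i, i \in s & \sum_(j <- s) F j = F i.
Proof.
elim: s => // a s IH _; rewrite big_cons.
case: s IH => [|b s] IH.
  by exists a; [rewrite mem_seq1 | rewrite big_nil addr0].
have [i Hi ->] := IH isT.
case: (lin_order (F a) (F i)) => ->.
  by exists a => //; rewrite mem_head.
by exists i => //; rewrite in_cons Hi orbT.
Qed.

Lemma sum_max_fin (I : finType) (F : I -> X) (i0 : I) :
  exists i, \sum_j F j = F i.
Proof.
have: enum I != [::].
  by apply/eqP => E; have := mem_enum I i0; rewrite E.
move/(sum_max F) => [i _ Hi]; exists i; by rewrite -Hi big_enum.
Qed.

Lemma sinvP x : x != 0 -> x * sinv x = 1.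
Proof.
move=> /mul_inv Hx; rewrite /sinv.
exact: (epsilon_spec (inhabits 0) (fun y => x * y = 1) Hx).
Qed.
Lemma sinvP' x : x != 0 -> sinv x * x = 1.
Proof. by move=> H; rewrite mulrC sinvP. Qed.

Lemma mul_neq0 x y : x != 0 -> y != 0 -> x * y != 0.
Proof.
move=> Hx Hy; apply/eqP => E.
have : (sinv x * x) * (y * sinv y) = 0.
  by rewrite mulrA -(mulrA _ x) E mulr0 mul0r.
by rewrite sinvP' // sinvP // mulr1 => /eqP; rewrite oner_eq0.
Qed.

Lemma sinv_neq0 x : x != 0 -> sinv x != 0.
Proof.
move=> H; apply/eqP => E; have := sinvP H; rewrite E mulr0 => /eqP.
by rewrite eq_sym oner_eq0.
Qed.

Lemma sinv_uniq x y : x * y = 1 -> sinv x = y.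
Proof.
move=> H; have Hx : x != 0.
  by apply/eqP => E; move: H; rewrite E mul0r => /eqP; rewrite eq_sym oner_eq0.
by rewrite -[sinv x]mulr1 -H mulrA sinvP' // mul1r.
Qed.

Lemma sinvM x y : x != 0 -> y != 0 -> sinv (x * y) = sinv x * sinv y.
Proof.
move=> Hx Hy; apply: sinv_uniq.
by rewrite mulrACA sinvP // sinvP // mulr1.
Qed.

Lemma sinvK x : x != 0 -> sinv (sinv x) = x.
Proof. by move=> Hx; apply: sinv_uniq; rewrite sinvP'. Qed.

Lemma sle_neq0 x y : x != 0 -> x <=s y -> y != 0.
Proof.
move=> Hx H; apply/eqP => E; move: H; rewrite /sle E addr0 => E'.
by move: Hx; rewrite E' eqxx.
Qed.

Lemma sle_cancel (c : X) x y : c != 0 -> c * x <=s c * y -> x <=s y.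
Proof.
move=> Hc /(sle_mull (sinv c)); by rewrite !mulrA sinvP' // !mul1r.
Qed.

Lemma expr_neq0 x k : x != 0 -> x ^+ k != 0.
Proof.
move=> Hx; elim: k => [|k IH]; first by rewrite expr0 oner_eq0.
by rewrite exprS mul_neq0.
Qed.

Lemma sle_expr x y k : x <=s y -> x ^+ k <=s y ^+ k.
Proof.
move=> H; elim: k => [|k IH]; first by rewrite !expr0; apply: sle_refl.
by rewrite !exprS; apply: sle_mul2.
Qed.

Lemma one_le_expr (c : X) k : 1 <=s c -> c <=s c ^+ k.+1.
Proof.
move=> H; rewrite exprS -{1}(mulr1 c); apply: sle_mull.
elim: k => [|k IH]; first by rewrite expr0; apply: sle_refl.
by rewrite exprS; apply: sle_trans IH _; rewrite -{1}(mul1r (c ^+ k)); apply: sle_mulr.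
Qed.

Lemma expr_inj_le x y k : (0 < k)%N -> x ^+ k = y ^+ k -> y <=s x -> x = y.
Proof.
case: k => // k _ E H.
have [y0|yn0] := eqVneq y 0.
  move: E; rewrite y0 expr0n /= => E.
  apply/eqP; apply: contraT => xn0.
  by have := expr_neq0 k.+1 xn0; rewrite E eqxx.
set c := x * sinv y.
have c1 : 1 <=s c by rewrite /c -(sinvP yn0); apply: sle_mulr.
have ck : c ^+ k.+1 = 1 by rewrite /c exprMn E -exprMn sinvP // expr1n.
have : c = 1 by apply: sle_anti; [rewrite -ck; apply: one_le_expr|].
by rewrite /c => E1; rewrite -[x]mulr1 -(sinvP' yn0) mulrA E1 mul1r.
Qed.

Lemma expr_le_inv x y k : (0 < k)%N -> x ^+ k <=s y ^+ k -> x <=s y.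
Proof.
move=> k0 H; case: (sle_total x y) => // H'.
have E : x ^+ k = y ^+ k by apply: sle_anti => //; apply: sle_expr.
by rewrite (expr_inj_le k0 E H'); apply: sle_refl.
Qed.

Lemma srootP k (a : X) : (0 < k)%N -> sroot k a ^+ k = a.
Proof.
move=> /(alg_complete a) H; rewrite /sroot.
exact: (epsilon_spec (inhabits 0) (fun y => y ^+ k = a) H).
Qed.


Section Paths.
Variable n : nat.

Lemma mxpowS (M : 'M[X]_n) k : mxpow M k.+1 = mxpow M k *m M.
Proof. by []. Qed.
Lemma mxpow0 (M : 'M[X]_n) : mxpow M 0 = 1%:M.
Proof. by []. Qed.

Lemma mxpowSl (M : 'M[X]_n) k : mxpow M k.+1 = M *m mxpow M k.
Proof.
elim: k => [|k IH]; first by rewrite mxpowS mxpow0 mul1mx mulmx1.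
by rewrite [LHS]mxpowS [in LHS]IH -mulmxA -mxpowS.
Qed.

Lemma mpath_le (M : 'M[X]_n) k (p : nat -> 'I_n) :
  \prod_(t < k) M (p t) (p t.+1) <=s mxpow M k (p 0%N) (p k).
Proof.
elim: k => [|k IH].
  by rewrite big_ord0 mxpow0 mxE eqxx mulr1n; apply: sle_refl.
rewrite big_ord_recr mxpowS mxE /=.
apply: sle_trans (sle_mulr _ IH) _.
exact: (sle_term (fun l => mxpow M k (p 0%N) l * M l (p k.+1)) (p k)).
Qed.

Lemma mpath_ex (M : 'M[X]_n) k i j :
  mxpow M k i j = 0 \/ exists p : nat -> 'I_n,
    [/\ p 0%N = i, p k = j & mxpow M k i j <=s \prod_(t < k) M (p t) (p t.+1)].
Proof.
elim: k j => [|k IH] j.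
  rewrite mxpow0 mxE; have [<-|ne] := eqVneq i j; last by left; rewrite mulr0n.
  right; exists (fun _ => i); split => //.
  by rewrite big_ord0 mulr1n; apply: sle_refl _.
rewrite mxpowS mxE.
have [l El] := sum_max_fin (fun l => mxpow M k i l * M l j) i.
rewrite El; case: (IH l) => [->|[p [p0 pk Hp]]]; first by left; rewrite mul0r.
right; exists (fun t => if t == k.+1 then j else p t); split => //.
  by rewrite eqxx.
rewrite big_ord_recr /= eqxx (_ : (k == k.+1) = false); last first.
  by apply/negbTE; rewrite neq_ltn ltnSn.
rewrite pk; apply: sle_mulr; apply: sle_trans Hp _.
rewrite (_ : \prod_(t < k) _ = \prod_(t < k) M (p t) (p t.+1)); first exact: sle_refl.
apply: eq_bigr => t _ /=.
rewrite (_ : (t == k.+1 :> nat) = false); last first.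
  by apply/negbTE; rewrite neq_ltn (ltn_trans (ltn_ord t)).
rewrite (_ : (t.+1 == k.+1 :> nat) = false) //.
by apply/negbTE; rewrite neq_ltn ltnS ltn_ord.
Qed.

End Paths.

Section Cycles.
Variable n : nat.
Variable C : 'M[X]_n.
Hypothesis Ccyc_h : forall (j : 'I_n) (s : {ffun 'I_j.+1 -> 'I_n}),
  \prod_(t < j.+1) C (s t) (s (ordS t)) <=s 1.

Lemma remove_cycle (p : nat -> 'I_n) a b : (a < b)%N -> (b <= n)%N -> p a = p b ->
  \prod_(t < n) C (p t) (p t.+1) <=s mxstar C (p 0%N) (p n).
Proof.
move=> ab bn pab.
set d := (b - a)%N.
have d0 : (0 < d)%N by rewrite subn_gt0.
have bE : b = (a + d)%N by rewrite /d subnKC // ltnW.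
have dn : (d <= n)%N by rewrite /d (leq_trans (leq_subr _ _) bn).
set q := fun t => if (t <= a)%N then p t else p (t + d)%N.
have Hq : forall t, (a <= t)%N -> q t = p (t + d)%N.
  move=> t at'; rewrite /q; case: ifP => // ta.
  have -> : t = a by apply/eqP; rewrite eqn_leq ta at'.
  by rewrite pab bE addnC.
set k := (n - d)%N.
have kn : (k < n)%N by rewrite /k ltn_subrL d0 (leq_trans d0 dn).
have ak : (a <= k)%N by rewrite /k leq_subRL // addnC -bE.
set F := fun t => C (p t) (p t.+1).
have Ep : \prod_(t < n) F t =
  (\prod_(0 <= t < a) F t) * ((\prod_(a <= t < b) F t) * \prod_(b <= t < n) F t).
  rewrite -(big_mkord xpredT F) (big_cat_nat (leq0n a) (leq_trans (ltnW ab) bn)).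
  by rewrite (big_cat_nat (ltnW ab) bn).
have Eq : \prod_(t < k) C (q t) (q t.+1) =
  (\prod_(0 <= t < a) F t) * \prod_(b <= t < n) F t.
  rewrite -(big_mkord xpredT (fun t => C (q t) (q t.+1))) (big_cat_nat (leq0n a) ak) /=; congr (_ * _).
    apply: eq_big_nat => t /andP [_ ta].
    by rewrite /F /q (ltnW ta) ta.
  rewrite bE big_addn; apply: eq_big_nat => t /andP [at' _].
  by rewrite /F !Hq // ?(leq_trans at') // addSn.
have Mle : \prod_(a <= t < b) F t <=s 1.
  have dE : d = (d.-1).+1 by rewrite prednK.
  rewrite -{1}(add0n a) bE big_addn addKn [in X in X <=s _]dE big_mkord.
  have jn : (d.-1 < n)%N by rewrite -ltnS -dE ltnS (leq_trans dn).
  have H := @Ccyc_h (Ordinal jn) [ffun t : 'I_(d.-1).+1 => p (t + a)%N].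
  apply: sle_trans H.
  rewrite (_ : \prod_(t < d.-1.+1) F (t + a)%N = \prod_(t < d.-1.+1)
     C ([ffun t : 'I_(d.-1).+1 => p (t + a)%N] t)
       ([ffun t : 'I_(d.-1).+1 => p (t + a)%N] (ordS t))); first exact: sle_refl.
  apply: eq_bigr => t _; rewrite !ffunE /F /=; congr (C _ _).
  have [tl|] := ltnP t d.-1.
    by rewrite modn_small ?ltnS.
  move=> tg; have te : nat_of_ord t = d.-1 by apply/eqP; rewrite eqn_leq tg -ltnS ltn_ord.
  by rewrite te modnn add0n -addSn -dE addnC -bE pab.
rewrite Ep.
apply: (@sle_trans _ (\prod_(0 <= t < a) F t * (1 * \prod_(b <= t < n) F t))).
  by apply: sle_mull; apply: sle_mulr.
rewrite mul1r -Eq.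
apply: sle_trans (mpath_le C k q) _.
have -> : q 0%N = p 0%N by rewrite /q leq0n.
have -> : q k = p n by rewrite Hq // /k subnK.
rewrite /mxstar summxE.
exact: (sle_term (fun i : 'I_n => mxpow C i (p 0%N) (p n)) (Ordinal kn)).
Qed.



Lemma pow_n_le_star i j : mxpow C n i j <=s mxstar C i j.
Proof.
case: (mpath_ex C n i j) => [->|[p [p0 pn H]]]; first exact: sle0.
apply: sle_trans H _; rewrite -p0 -pn.
pose g := fun t : 'I_n.+1 => p t.
have : ~~ injectiveb g.
  by apply/negP => /injectiveP/leq_card; rewrite !card_ord ltnn.
case/injectivePn => x [y] xy gxy.
have bx : (x <= n)%N by rewrite -ltnS ltn_ord.
have bY : (y <= n)%N by rewrite -ltnS ltn_ord.
case: (ltngtP x y) => [xy'|yx'|e].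
- exact: remove_cycle xy' bY gxy.
- exact: remove_cycle yx' bx (esym gxy).
- by move: xy; rewrite (val_inj e) eqxx.
Qed.

Lemma star_closed k l : (C *m mxstar C) k l <=s mxstar C k l.
Proof.
rewrite /mxstar mulmx_sumr !summxE; apply: sle_sumb => r _.
rewrite -mxpowSl.
case: (ltnP r.+1 n) => h.
  exact: (sle_term (fun i : 'I_n => mxpow C i k l) (Ordinal h)).
have -> : r.+1 = n by apply/eqP; rewrite eqn_leq h ltn_ord.
have := pow_n_le_star k l; by rewrite /mxstar summxE.
Qed.

End Cycles.

Section Obj.
Variables n m : nat.
Variables (A : 'I_m -> 'M[X]_n) (w : 'I_m -> X).

Lemma ring_test (a b c d e : X) : c * (e * (a + b)) * d = e * (c * a * d + c * b * d).
Proof. ring. Qed.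

Lemma sinvz_nz (y : X) : y != 0 -> sinvz y = sinv y.
Proof. by move=> H; rewrite /sinvz (negbTE H). Qed.

Lemma f_eq (x : 'cV[X]_n) : regular x ->
  \sum_(i < m) w i * mdist (A i) (x *m vconj x) =
  \sum_k \sum_l sinv (x k 0) * (\sum_(i < m) w i *: (A i + mconj (A i))) k l * x l 0.
Proof.
move=> xr0; have xr : forall i, x i 0 != 0 by move=> i; apply/eqP; exact: xr0.
have Pe : forall k l, (x *m vconj x) k l = x k 0 * sinv (x l 0).
  by move=> k l; rewrite mxE big_ord1 mxE sinvz_nz.
have Pc : forall k l, mconj (x *m vconj x) k l = sinv (x l 0) * x k 0.
  move=> k l; rewrite mxE Pe sinvz_nz; last by rewrite mul_neq0 // sinv_neq0.
  by rewrite sinvM ?sinv_neq0 // sinvK.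
transitivity (\sum_(i < m) \sum_k \sum_l w i *
   (sinv (x k 0) * A i k l * x l 0 + sinv (x k 0) * sinvz (A i l k) * x l 0)).
  apply: eq_bigr => i _.
  rewrite /mdist /mxtrace.
  have E1 : \sum_a (mconj (x *m vconj x) *m A i) a a =
     \sum_k \sum_l sinv (x k 0) * A i k l * x l 0.
    rewrite (eq_bigr (fun a => \sum_b sinv (x b 0) * x a 0 * A i b a)); last first.
      by move=> a _; rewrite mxE; apply: eq_bigr => b _; rewrite Pc.
    rewrite exchange_big; apply: eq_bigr => k _; apply: eq_bigr => l _.
    by rewrite mulrAC.
  have E2 : \sum_a (mconj (A i) *m (x *m vconj x)) a a =
     \sum_k \sum_l sinv (x k 0) * sinvz (A i l k) * x l 0.
    apply: eq_bigr => k _; rewrite mxE; apply: eq_bigr => l _.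
    rewrite Pe mxE; ring.
  rewrite E1 E2 -big_split mulr_sumr; apply: eq_bigr => k _.
  by rewrite -big_split mulr_sumr.
symmetry.
rewrite (eq_bigr (fun k => \sum_(i < m) \sum_l w i *
   (sinv (x k 0) * A i k l * x l 0 + sinv (x k 0) * sinvz (A i l k) * x l 0))); last first.
  move=> k _; rewrite exchange_big /=.
  apply: eq_bigr => l _; rewrite summxE mulr_sumr mulr_suml.
  by apply: eq_bigr => i _; rewrite !mxE; ring.
by rewrite exchange_big.
Qed.
End Obj.

Section Main.
Variable n : nat.
Hypothesis n_pos : (0 < n)%N.
Variable B : 'M[X]_n.
Hypothesis Bnz : forall i j, B i j != 0.
Local Notation mu := (specrad B).
Local Notation C := (sinv mu *: B).

Lemma mu_term (j : 'I_n) (s : {ffun 'I_j.+1 -> 'I_n}) :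
  sroot j.+1 (\prod_(t < j.+1) B (s t) (s (ordS t))) <=s mu.
Proof.
rewrite /specrad; apply: sle_trans _ (sle_term _ j).
exact: (sle_term (fun s : {ffun 'I_j.+1 -> 'I_n} =>
   sroot j.+1 (\prod_(t < j.+1) B (s t) (s (ordS t)))) s).
Qed.

Lemma sroot1 (a : X) : sroot 1 a = a.
Proof. by have := srootP a (ltn0Sn 0); rewrite expr1. Qed.

Lemma mu_neq0 : mu != 0.
Proof.
pose j0 := Ordinal n_pos.
have := @mu_term j0 [ffun _ => j0].
rewrite big_ord1 !ffunE sroot1; exact: sle_neq0.
Qed.

Lemma cyc_B (j : 'I_n) (s : {ffun 'I_j.+1 -> 'I_n}) :
  \prod_(t < j.+1) B (s t) (s (ordS t)) <=s mu ^+ j.+1.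
Proof.
rewrite -(srootP (\prod_(t < j.+1) B (s t) (s (ordS t))) (ltn0Sn j)).
exact: sle_expr (mu_term s).
Qed.

Lemma Ccyc (j : 'I_n) (s : {ffun 'I_j.+1 -> 'I_n}) :
  \prod_(t < j.+1) C (s t) (s (ordS t)) <=s 1.
Proof.
rewrite (eq_bigr (fun t => sinv mu * B (s t) (s (ordS t)))); last by move=> t _; rewrite mxE.
rewrite big_split /= prodr_const card_ord.
apply: sle_trans (sle_mull _ (cyc_B s)) _.
by rewrite -exprMn (sinvP' mu_neq0) expr1n; apply: sle_refl.
Qed.

Lemma Cnz i j : C i j != 0.
Proof.
rewrite mxE; apply: mul_neq0; last exact: Bnz.
apply: sinv_neq0; exact: mu_neq0.
Qed.

Lemma lower (x : 'cV[X]_n) (c : X) : regular x ->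
  (forall k l, sinv (x k 0) * B k l * x l 0 <=s c) -> mu <=s c.
Proof.
move=> xr0 H; have xr : forall i, x i 0 != 0 by move=> i; apply/eqP.
have Hf : forall k l, B k l <=s c * x k 0 * sinv (x l 0).
  move=> k l; have := sle_mulr (x k 0 * sinv (x l 0)) (H k l).
  have -> : sinv (x k 0) * B k l * x l 0 * (x k 0 * sinv (x l 0)) =
     B k l * (x k 0 * sinv (x k 0)) * (x l 0 * sinv (x l 0)) by ring.
  by rewrite !sinvP // !mulr1 !mulrA.
rewrite /specrad; apply: sle_sumb => j _; apply: sle_sumb => s _.
apply: (@expr_le_inv _ _ j.+1) => //.
rewrite srootP //.
apply: (@sle_trans _ (\prod_(t < j.+1) (c * x (s t) 0 * sinv (x (s (ordS t)) 0)))).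
  by apply: sle_prod => t _; exact: Hf.
rewrite big_split big_split /= prodr_const card_ord.
have -> : \prod_(t < j.+1) sinv (x (s (ordS t)) 0) = \prod_(t < j.+1) sinv (x (s t) 0).
  by rewrite [RHS](reindex_inj (@ordS_inj j.+1)).
rewrite -mulrA -big_split /= big1 ?mulr1; first exact: sle_refl.
by move=> t _; rewrite sinvP.
Qed.

Definition gobj (x : 'cV[X]_n) := \sum_k \sum_l sinv (x k 0) * B k l * x l 0.

Lemma term_le_g (x : 'cV[X]_n) k l : sinv (x k 0) * B k l * x l 0 <=s gobj x.
Proof.
apply: sle_trans (sle_term _ k).
exact: (sle_term (fun l => sinv (x k 0) * B k l * x l 0) l).
Qed.

Lemma g_mu (x : 'cV[X]_n) : regular x ->
  (gobj x = mu <-> forall k l, sinv (x k 0) * B k l * x l 0 <=s mu).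
Proof.
move=> xr; split.
  by move=> <- k l; apply: term_le_g.
move=> H; apply: sle_anti.
  by apply: sle_sumb => k _; apply: sle_sumb => l _; apply: H.
by apply: (lower xr); apply: term_le_g.
Qed.

Lemma equiv_C (x : 'cV[X]_n) : regular x -> forall k l,
  (sinv (x k 0) * B k l * x l 0 <=s mu <-> C k l * x l 0 <=s x k 0).
Proof.
move=> xr0 k l; have xr : forall i, x i 0 != 0 by move=> i; apply/eqP.
have m0 := mu_neq0.
rewrite mxE; split => H.
  have := sle_mull (sinv mu * x k 0) H.
  have -> : sinv mu * x k 0 * (sinv (x k 0) * B k l * x l 0) =
    sinv mu * B k l * x l 0 * (x k 0 * sinv (x k 0)) by ring.
  by rewrite sinvP // mulr1 (mulrAC (sinv mu) (x k 0) mu) sinvP' // mul1r.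
have := sle_mull (mu * sinv (x k 0)) H.
have -> : mu * sinv (x k 0) * (sinv mu * B k l * x l 0) =
    sinv (x k 0) * B k l * x l 0 * (mu * sinv mu) by ring.
by rewrite sinvP // mulr1 -(mulrA mu) sinvP' // mulr1.
Qed.

Lemma mulmx_mono_r (M : 'M[X]_n) (v v' : 'cV[X]_n) k :
  (forall l, v l 0 <=s v' l 0) -> (M *m v) k 0 <=s (M *m v') k 0.
Proof.
by move=> H; rewrite !mxE; apply: sle_sum => l _; apply: sle_mull.
Qed.

Lemma mulmx_mono_l (M N : 'M[X]_n) (v : 'cV[X]_n) k :
  (forall i j, M i j <=s N i j) -> (M *m v) k 0 <=s (N *m v) k 0.
Proof.
by move=> H; rewrite !mxE; apply: sle_sum => l _; apply: sle_mulr.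
Qed.

Lemma star_fix (x : 'cV[X]_n) :
  (forall k l, C k l * x l 0 <=s x k 0) -> mxstar C *m x = x.
Proof.
move=> H.
have Cx : forall k, (C *m x) k 0 <=s x k 0.
  by move=> k; rewrite mxE; apply: sle_sumb => l _; apply: H.
have Hp : forall r k, (mxpow C r *m x) k 0 <=s x k 0.
  elim=> [|r IH] k; first by rewrite mxpow0 mul1mx; apply: sle_refl.
  rewrite mxpowS -mulmxA; apply: sle_trans (mulmx_mono_r _ _ Cx) _.
  exact: IH.
apply/matrixP => k j; rewrite ord1 {j}.
rewrite /mxstar mulmx_suml summxE; apply: sle_anti.
  by apply: sle_sumb => r _; apply: Hp.
apply: sle_trans (sle_term _ (Ordinal n_pos)).
have -> : mxpow C (Ordinal n_pos) = 1%:M by [].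
by rewrite mul1mx; apply: sle_refl.
Qed.

Lemma star_sol (u : 'cV[X]_n) k l :
  C k l * (mxstar C *m u) l 0 <=s (mxstar C *m u) k 0.
Proof.
apply: (@sle_trans _ ((C *m (mxstar C *m u)) k 0)).
  by rewrite [X in _ <=s X]mxE; apply: (sle_term (fun l => C k l * (mxstar C *m u) l 0)).
rewrite mulmxA; apply: mulmx_mono_l => i j.
exact: (star_closed Ccyc).
Qed.

Lemma star_regular (u : 'cV[X]_n) : u != 0 -> regular (mxstar C *m u).
Proof.
move=> un0.
have [v uv] : exists v, u v 0 != 0.
  case: (pickP (fun v => u v 0 != 0)) => [v Hv|H]; first by exists v.
  move: un0; have -> : u = 0; last by rewrite eqxx.
  by apply/matrixP => i j; rewrite ord1 mxE; apply/eqP; move: (H i) => /negbFE.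
move=> k; apply/eqP.
rewrite /mxstar mulmx_suml summxE.
have [kv|kv] := eqVneq k v.
  apply: (sle_neq0 uv); apply: sle_trans (sle_term _ (Ordinal n_pos)).
  have -> : mxpow C (Ordinal n_pos) = 1%:M by [].
  by rewrite mul1mx kv; apply: sle_refl.
have n1 : (1 < n)%N.
  rewrite ltnNge; apply/negP => n1; move/negP: kv; apply; apply/eqP/val_inj.
  have k0 : val k = 0%N by apply/eqP; rewrite -leqn0 -ltnS (leq_trans (ltn_ord k) n1).
  have v0 : val v = 0%N by apply/eqP; rewrite -leqn0 -ltnS (leq_trans (ltn_ord v) n1).
  by rewrite k0 v0.
apply: (sle_neq0 (mul_neq0 (Cnz k v) uv)).
apply: sle_trans (sle_term _ (Ordinal n1)).
have -> : mxpow C (Ordinal n1) = C by rewrite /mxpow /= mul1mx.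
rewrite [X in _ <=s X]mxE.
exact: (sle_term (fun l => C k l * u l 0) v).
Qed.

End Main.

Lemma main_res (n m : nat) (n_pos : (0 < n)%N)
  (A : 'I_m -> 'M[X]_n) (w : 'I_m -> X) :
  let B : 'M[X]_n := \sum_(i < m) w i *: (A i + mconj (A i)) in
  (forall i j, B i j != 0) ->
  let mu := specrad B in
  let Bmu := sinv mu *: B in
  let f := fun x : 'cV[X]_n => \sum_(i < m) w i * mdist (A i) (x *m vconj x) in
  ((exists x : 'cV[X]_n, regular x /\ f x = mu) /\
   (forall x : 'cV[X]_n, regular x -> sle mu (f x))) /\
  (forall x : 'cV[X]_n,
     (regular x /\ f x = mu) <->
     (exists u : 'cV[X]_n, u != 0 /\ x = mxstar Bmu *m u)).
Proof.
move=> B Bnz mu Bmu f.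
have fg : forall x : 'cV[X]_n, regular x -> f x = gobj B x.
  by move=> x xr; rewrite /f f_eq.
have sr := star_regular n_pos Bnz.
split; [split|].
- pose u : 'cV[X]_n := const_mx 1.
  have u0 : u != 0.
    apply/eqP => /matrixP/(_ (Ordinal n_pos) 0); rewrite !mxE => /eqP.
    by rewrite oner_eq0.
  exists (mxstar Bmu *m u); have xr := sr u u0; split => //.
  rewrite fg //; apply/(g_mu B xr) => k l.
  by apply/(equiv_C n_pos Bnz xr); apply: (star_sol n_pos Bnz).
- move=> x xr; rewrite fg //; apply: (lower xr); exact: term_le_g.
- move=> x; split.
    case=> xr fx; exists x; split.
      apply/eqP => x0; have := xr (Ordinal n_pos); rewrite x0 mxE; by [].
    symmetry; apply: (star_fix n_pos) => k l; apply/(equiv_C n_pos Bnz xr).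
    by move: fx; rewrite fg // => /(g_mu B xr); apply.
  case=> u [u0 ->]; have xr := sr u u0; split => //.
  rewrite fg //; apply/(g_mu B xr) => k l.
  by apply/(equiv_C n_pos Bnz xr); apply: (star_sol n_pos Bnz).
Qed.

End Basic.

Theorem theorem3 (X : comNzSemiRingType)
  (add_idem : forall x : X, x + x = x)
  (mul_inv : forall x : X, x != 0 -> exists y : X, x * y = 1)
  (lin_order : forall x y : X, x + y = x \/ x + y = y)
  (alg_complete : forall (a : X) (p : nat), (0 < p)%N -> exists x : X, x ^+ p = a)
  (n m : nat) (n_pos : (0 < n)%N)
  (A : 'I_m -> 'M[X]_n) (w : 'I_m -> X) :
  let B : 'M[X]_n := \sum_(i < m) w i *: (A i + mconj (A i)) in
  (forall i j, B i j != 0) ->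
  let mu := specrad B in
  let Bmu := sinv mu *: B in
  let f := fun x : 'cV[X]_n => \sum_(i < m) w i * mdist (A i) (x *m vconj x) in
  (* the minimum value equals mu *)
  ((exists x : 'cV[X]_n, regular x /\ f x = mu) /\
   (forall x : 'cV[X]_n, regular x -> sle mu (f x))) /\
  (* the set of all solutions *)
  (forall x : 'cV[X]_n,
     (regular x /\ f x = mu) <->
     (exists u : 'cV[X]_n, u != 0 /\ x = mxstar Bmu *m u)).
Proof.
by apply: main_res.
Qed.
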